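(* Let $m\ge3$, $\mu\ge0$, and $c\in\mathbb{R}^m_{\ge0}$. For any demand vectors $d=(d_L,d_R)$ and $d'=(d'_L,d'_R)$ with $d_L,d'_L\in\Delta^L$ and $d_R,d'_R\in\Delta^R$, $$\mathrm{OPT}_\mu(d)\le\mathrm{OPT}_\mu(d')+\big(2\|c\|_\infty+66\mu\log m\big)\|d-d'\|_1+\mu m^{-30}.$$
   Context: $L,R$ are finite nonempty sets, $m=|L||R|$, and coordinates of $\mathbb{R}^m$ are indexed by pairs $(i,j)\in L\times R$. $\mathbf{B}\in\{0,1\}^{m\times(|L|+|R|)}$ is the unsigned edge-vertex incidence matrix of the complete bipartite graph on $L\cup R$: $\mathbf{B}_{(i,j),v}=1$ iff $v\in\{i,j\}$. $H(x)=\sum_i x_i\log x_i$ ($0\log0=0$, natural log). $\mathrm{OPT}_\mu(d)=\min_{x\in\Delta^m,\ \mathbf{B}^\top x=d}\ \langle c,x\rangle+\mu H(x)$. $\Delta^k$ denotes the probability simplex. *)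

(* Defs.v *)
From HB Require Import structures.
From mathcomp Require Import all_boot all_order all_algebra.
From mathcomp Require Import all_classical all_reals all_analysis.
Set Implicit Arguments. Unset Strict Implicit. Unset Printing Implicit Defensive.
Import Order.TTheory GRing.Theory Num.Theory.
Local Open Scope ring_scope.
Local Open Scope classical_set_scope.

Section Defs.
Variables (R : realType) (L Rt : finType).

(* Unsigned edge-vertex incidence matrix of the complete bipartite graph on
   L ⊔ Rt (vertices are inl i, inr j; edges are pairs (i,j)). *)
Definition incB (e : L * Rt) (v : L + Rt) : R :=
  match v with
  | inl i => if i == e.1 then 1 else 0
  | inr j => if j == e.2 then 1 else 0
  end.

Definition Bt (x : L * Rt -> R) (v : L + Rt) : R :=
  \sum_(e : L * Rt) incB e v * x e.

Definition in_simplex (T : finType) (x : T -> R) : Prop :=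
  (forall t, 0 <= x t) /\ \sum_(t : T) x t = 1.

Definition negent (x : L * Rt -> R) : R :=
  \sum_(e : L * Rt) (if x e == 0 then 0 else x e * ln (x e)).

Definition objective (c : L * Rt -> R) (mu : R) (x : L * Rt -> R) : R :=
  \sum_(e : L * Rt) c e * x e + mu * negent x.

(* OPT_mu(d) = min { <c,x> + mu H(x) | x in Delta^m, B^T x = d }
   (stated as the infimum; it is attained whenever the set is nonempty) *)
Definition OPT (c : L * Rt -> R) (mu : R) (d : L + Rt -> R) : R :=
  inf [set objective c mu x | x in [set x | in_simplex x /\ Bt x = d]].

Definition demand (d : L + Rt -> R) : Prop :=
  in_simplex (fun i : L => d (inl i)) /\ in_simplex (fun j : Rt => d (inr j)).

Definition norm1 (d : L + Rt -> R) : R := \sum_(v : L + Rt) `|d v|.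

Definition normInf (c : L * Rt -> R) : R := \big[Num.max/0]_(e : L * Rt) `|c e|.

End Defs.

(* Main.v *)
Require Import Defs.
From HB Require Import structures.
From mathcomp Require Import all_boot all_order all_algebra.
From mathcomp Require Import all_classical all_reals all_analysis.
From mathcomp Require Import lra.
Import Order.TTheory GRing.Theory Num.Theory.
Local Open Scope ring_scope.
Set Implicit Arguments. Unset Strict Implicit.

Section Phi.
Variable R : realType.

Lemma ln_le_sub1 (z : R) : 0 < z -> ln z <= z - 1.
Proof.
move=> z0; have := @le_ln1Dx R (z - 1).
have -> : 1 + (z - 1) = z by rewrite addrC subrK.
apply; lra.
Qed.

(* u * ln (v/u) <= v - u *)
Lemma conv_phi (u v : R) : 0 <= u -> 0 < v ->
  v * ln v - u * ln u <= (1 + ln v) * (v - u).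
Proof.
move=> u0 v0; case: (eqVneq u 0) => [->|un0].
  rewrite mul0r subr0 subr0 mulrDl mul1r mulrC; lra.
have up : 0 < u by rewrite lt_def un0.
have h := ln_le_sub1 (divr_gt0 v0 up).
rewrite ln_div ?posrE // in h.
have : u * (ln v - ln u) <= u * (v / u - 1) by rewrite ler_wpM2l // ltW.
have -> : u * (v / u - 1) = v - u.
  by rewrite mulrBr mulr1 mulrCA divff ?mulr1 ?gt_eqF.
move=> h2; nra.
Qed.

Lemma superadd_phi (v e : R) : 0 <= v -> 0 < e ->
  v * ln v + e * ln e <= (v + e) * ln (v + e).
Proof.
move=> v0 e0; rewrite mulrDl; apply: lerD.
  case: (eqVneq v 0) => [->|vn0]; first by rewrite !mul0r.
  have vp : 0 < v by rewrite lt_def vn0.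
  by apply: ler_wpM2l => //; rewrite ler_ln ?posrE; lra.
by apply: ler_wpM2l; [lra|rewrite ler_ln ?posrE; lra].
Qed.

Lemma eta_bound (e m : R) (K : nat) : 0 < e -> 1 <= m ->
  - (e * ln e) <= K%:R * ln m * e + (m ^+ K)^-1.
Proof.
move=> e0 m1.
have mK : 0 < m ^+ K by apply: exprn_gt0; lra.
have z0 : 0 < e * m ^+ K by apply: mulr_gt0.
have zi : 0 < (e * m ^+ K)^-1 by rewrite invr_gt0.
have h := ln_le_sub1 zi.
rewrite lnV ?posrE // lnM ?posrE // lnXn in h; last lra.
rewrite invfM in h.
have : e * (- (ln e + ln m *+ K)) <= e * (e^-1 * (m ^+ K)^-1 - 1).
  by rewrite ler_wpM2l // ltW.
rewrite mulrBr mulrA divff ?gt_eqF // mul1r mulr1 -mulr_natr.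
move=> h2.
have : 0 <= (m ^+ K)^-1 by rewrite invr_ge0 ltW.
nra.
Qed.
End Phi.

Section S.
Variables (R : realType) (L Rt : finType).
Local Notation T := (L * Rt)%type.

Lemma sum_rows (F : T -> R) : \sum_e F e = \sum_i \sum_j F (i, j).
Proof. by rewrite pair_big; apply: eq_bigr => -[]. Qed.

Lemma sum_cols (F : T -> R) : \sum_e F e = \sum_j \sum_i F (i, j).
Proof. by rewrite sum_rows exchange_big. Qed.

Lemma Bt_inl (x : T -> R) i : Bt x (inl i) = \sum_j x (i, j).
Proof.
rewrite /Bt sum_rows (bigD1 i) //= [X in _ + X]big1 ?addr0.
  by apply: eq_bigr => j _; rewrite eqxx mul1r.
move=> i' ne; apply: big1 => j _; by rewrite eq_sym (negbTE ne) mul0r.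
Qed.

Lemma Bt_inr (x : T -> R) j : Bt x (inr j) = \sum_i x (i, j).
Proof.
rewrite /Bt sum_cols (bigD1 j) //= [X in _ + X]big1 ?addr0.
  by apply: eq_bigr => i _; rewrite eqxx mul1r.
move=> j' ne; apply: big1 => i _; by rewrite eq_sym (negbTE ne) mul0r.
Qed.

Lemma le_sum_entry (I : finType) (F : I -> R) i : (forall k, 0 <= F k) -> F i <= \sum_k F k.
Proof.
move=> F0; rewrite (bigD1 i) //= lerDl; apply: sumr_ge0 => k _; exact: F0.
Qed.


Lemma lam_facts (p q : R) : 0 <= p -> 0 <= q ->
  let l := Num.min (Num.min 1 p) q in
  [/\ 0 <= l, l <= p, l <= q & 1 - l <= `|1 - p| + `|1 - q|].
Proof.
move=> p0 q0 l; split.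
- by rewrite /l !le_min p0 q0 ler01.
- by rewrite /l !ge_min lexx orbT.
- by rewrite /l ge_min lexx orbT.
- have h1 := ler_norm (1 - p); have h2 := ler_norm (1 - q).
  have n1 := normr_ge0 (1 - p); have n2 := normr_ge0 (1 - q).
  suff : 1 - `|1 - p| - `|1 - q| <= l by lra.
  rewrite /l !le_min; apply/andP; split; [apply/andP; split|]; lra.
Qed.

Lemma row_bound (I : finType) (a a' : R) (F : I -> R) (G : I -> R) :
  0 <= a -> \sum_j F j = a' -> (forall j, 0 <= F j) ->
  (forall j, G j <= F j * (a / a')) -> \sum_j G j <= a.
Proof.
move=> a0 hF F0 hG.
apply: (le_trans (ler_sum _ (fun j _ => hG j))).
rewrite -mulr_suml hF.
case: (eqVneq a' 0) => [->|na]; first by rewrite mul0r.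
by rewrite mulrCA divff // mulr1.
Qed.


Lemma mass_bound (a a' : R) : 0 <= a' -> a' * `|1 - a / a'| <= `|a - a'|.
Proof.
move=> a0; case: (eqVneq a' 0) => [->|na]; first by rewrite mul0r normr_ge0.
have -> : a' * `|1 - a / a'| = `|a' - a|.
  by rewrite -{1}(ger0_norm a0) -normrM mulrBr mulr1 mulrCA divff // mulr1.
by rewrite distrC.
Qed.

Lemma construct (d d' : L + Rt -> R) (hd : demand d) (hd' : demand d')
  (x' : T -> R) (hx' : in_simplex x') (hB : Bt x' = d') :
  exists (x y E : T -> R) (s : R),
    [/\ in_simplex x /\ Bt x = d, (forall e, x e = y e + E e),
        (forall e, 0 <= y e <= x' e), (forall e, 0 <= E e) &
        [/\ \sum_e E e = s, \sum_e (x' e - y e) = s &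
            s <= norm1 (fun v => d v - d' v)]].
Proof.
case: hd => [[ha0 ha1] [hb0 hb1]]; case: hd' => [[ha0' ha1'] [hb0' hb1']].
case: hx' => hx0 hx1.
pose p i := d (inl i) / d' (inl i).
pose q j := d (inr j) / d' (inr j).
have p0 i : 0 <= p i by rewrite divr_ge0.
have q0 j : 0 <= q j by rewrite divr_ge0.
pose lam (e : T) := Num.min (Num.min 1 (p e.1)) (q e.2).
have hlam e := lam_facts (p0 e.1) (q0 e.2).
pose y e := x' e * lam e.
have y0 e : 0 <= y e by case: (hlam e) => *; rewrite mulr_ge0.
have yx e : y e <= x' e.
  rewrite /y -[leRHS]mulr1; apply: ler_wpM2l => //.
  by rewrite /lam !ge_min lexx.
have rowx i : \sum_j x' (i, j) = d' (inl i) by rewrite -Bt_inl hB.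
have colx j : \sum_i x' (i, j) = d' (inr j) by rewrite -Bt_inr hB.
pose ra i := d (inl i) - \sum_j y (i, j).
pose rb j := d (inr j) - \sum_i y (i, j).
have ra0 i : 0 <= ra i.
  rewrite subr_ge0; apply: (row_bound (ha0 i) (rowx i)) => // j.
  by case: (hlam (i, j)) => *; rewrite /y ler_wpM2l.
have rb0 j : 0 <= rb j.
  rewrite subr_ge0; apply: (row_bound (hb0 j) (colx j)) => // i.
  by case: (hlam (i, j)) => *; rewrite /y ler_wpM2l.
pose s := 1 - \sum_e y e.
have sE : \sum_e (x' e - y e) = s by rewrite sumrB hx1.
have sra : \sum_i ra i = s by rewrite sumrB ha1 /s sum_rows.
have srb : \sum_j rb j = s by rewrite sumrB hb1 /s sum_cols.
pose E (e : T) := ra e.1 * rb e.2 / s.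
have E0 e : 0 <= E e by rewrite /E divr_ge0 ?mulr_ge0 // -sE sumr_ge0 // => e' _; rewrite subr_ge0.
have ss : s * s / s = s.
  by case: (eqVneq s 0) => [->|ns]; [rewrite !mul0r | rewrite -mulrA divff ?mulr1].
have rak i : ra i * s / s = ra i.
  case: (eqVneq s 0) => [s0|ns]; last by rewrite -mulrA divff ?mulr1.
  have := @psumr_eq0P R L xpredT ra (fun i _ => ra0 i).
  by rewrite sra s0 => /(_ erefl i isT) ->; rewrite ?mul0r.
have rbk j : rb j * s / s = rb j.
  case: (eqVneq s 0) => [s0|ns]; last by rewrite -mulrA divff ?mulr1.
  have := @psumr_eq0P R Rt xpredT rb (fun i _ => rb0 i).
  by rewrite srb s0 => /(_ erefl j isT) ->; rewrite ?mul0r.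
have sumE : \sum_e E e = s.
  have -> : \sum_e E e = (\sum_i ra i) * (\sum_j rb j) / s.
    rewrite sum_rows mulr_suml mulr_suml; apply: eq_bigr => i _.
    by rewrite mulr_sumr mulr_suml.
  by rewrite sra srb ss.
pose x e := y e + E e.
exists x, y, E, s; split => //.
- have hBx : Bt x = d.
    apply: boolp.funext => -[i|j].
    + rewrite Bt_inl /x big_split /=.
      have -> : \sum_j E (i, j) = ra i.
        have -> : \sum_j E (i, j) = ra i * (\sum_j rb j) / s.
          by rewrite mulr_sumr mulr_suml.
        by rewrite srb rak.
      by rewrite /ra addrC subrK.
    + rewrite Bt_inr /x big_split /=.
      have -> : \sum_i E (i, j) = rb j.
        have -> : \sum_i E (i, j) = rb j * (\sum_i ra i) / s.
          rewrite mulr_sumr mulr_suml; apply: eq_bigr => i _.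
          by rewrite /E /= (mulrC (ra i)).
        by rewrite sra rbk.
      by rewrite /rb addrC subrK.
  split => //; split; first by move=> e; rewrite /x addr_ge0.
  by rewrite /x big_split /= sumE /s addrC subrK.
- by move=> e; rewrite y0 yx.
- split => //.
  rewrite -sE /norm1 big_sumType /=.
  apply: (le_trans (y := \sum_e x' e * (`|1 - p e.1| + `|1 - q e.2|))).
    apply: ler_sum => e _; case: (hlam e) => _ _ _ l1.
    rewrite /y -{1}[x' e]mulr1 -mulrBr ler_wpM2l //.
  rewrite (eq_bigr (fun e => x' e * `|1 - p e.1| + x' e * `|1 - q e.2|)); last by move=> e _; rewrite mulrDr.
  rewrite big_split /=; apply: lerD.
  + rewrite sum_rows; apply: ler_sum => i _.
    rewrite /= -mulr_suml rowx; exact: mass_bound.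
  + rewrite sum_cols; apply: ler_sum => j _.
    rewrite /= -mulr_suml colx; exact: mass_bound.
Qed.


Lemma phi_entry (u v A W m : R) (K : nat) : 0 <= u -> 0 <= v -> v <= 1 ->
  0 <= A -> 0 <= W -> v - u <= A -> u - v <= W -> 1 <= m ->
  v * ln v - u * ln u <= A + K%:R * ln m * W + (m ^+ K)^-1.
Proof.
move=> u0 v0 v1 A0 W0 hA hW m1.
have lm : 0 <= ln m by apply: ln_ge0.
have iK : 0 <= (m ^+ K)^-1 by rewrite invr_ge0 exprn_ge0 //; lra.
have KW : 0 <= K%:R * ln m * W by rewrite !mulr_ge0.
case: (leP u v) => huv.
  case: (eqVneq v 0) => [v00|vn0].
    have u00 : u = 0 by lra.
    rewrite v00 u00 !mul0r subrr; lra.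
  have vp : 0 < v by rewrite lt_def vn0.
  have h := conv_phi u0 vp.
  have lv := ln_le0 v1.
  have : (1 + ln v) * (v - u) <= v - u by nra.
  lra.
have ep : 0 < u - v by lra.
have h := superadd_phi v0 ep.
have euv : v + (u - v) = u by rewrite addrC subrK.
rewrite euv in h.
have h2 := eta_bound K ep m1.
have : K%:R * ln m * (u - v) <= K%:R * ln m * W by rewrite ler_wpM2l // mulr_ge0.
lra.
Qed.

Lemma negentE (x : T -> R) : negent x = \sum_e x e * ln (x e).
Proof. by apply: eq_bigr => e _; case: eqP => [->|]; rewrite ?mul0r. Qed.

Lemma normInf_ge (c : T -> R) e : `|c e| <= normInf c.
Proof. by rewrite /normInf (bigD1 e) //= le_max lexx. Qed.

Lemma normInf_ge0 (c : T -> R) : 0 <= normInf c.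
Proof. by rewrite /normInf; elim/big_ind: _ => // a b ha hb; rewrite le_max ha. Qed.

Lemma obj_step (c : T -> R) (mu : R) (hmu : 0 <= mu) (hc : forall e, 0 <= c e)
  (x x' y E : T -> R) (s m : R) (K : nat) :
  in_simplex x -> in_simplex x' -> (forall e, x e = y e + E e) ->
  (forall e, 0 <= y e <= x' e) -> (forall e, 0 <= E e) ->
  \sum_e E e = s -> \sum_e (x' e - y e) = s -> m = #|{: T}|%:R -> 1 <= m ->
  objective c mu x <= objective c mu x'
     + (normInf c * s + mu * (s + K%:R * ln m * s + m * (m ^+ K)^-1)).
Proof.
move=> [x0 x1] [x'0 x'1] hx hy E0 sE sW mE m1.
rewrite /objective !negentE.
have lin : \sum_e c e * x e <= \sum_e c e * x' e + normInf c * s.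
  rewrite -sE mulr_sumr -big_split /=; apply: ler_sum => e _.
  case/andP: (hy e) => y0 yx.
  rewrite hx mulrDr; apply: lerD; first by rewrite ler_wpM2l.
  rewrite ler_wpM2r //; apply: le_trans (normInf_ge c e); exact: ler_norm.
have ent : \sum_e x e * ln (x e) <= \sum_e x' e * ln (x' e)
    + (s + K%:R * ln m * s + m * (m ^+ K)^-1).
  have -> : m * (m ^+ K)^-1 = \sum_(e : T) (m ^+ K)^-1.
    by rewrite sumr_const mE mulr_natl.
  rewrite -{1}sE -sW mulr_sumr -!big_split /=; apply: ler_sum => e _.
  case/andP: (hy e) => y0 yx.
  rewrite -lerBlDl -!addrA.
  have := @phi_entry (x' e) (x e) (E e) (x' e - y e) m K (x'0 e) (x0 e)
     _ (E0 e) _ _ _ m1.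
  rewrite addrA; apply.
  - rewrite -x1; exact: le_sum_entry.
  - by rewrite subr_ge0.
  - rewrite hx; lra.
  - rewrite hx; have := E0 e; lra.
have := ler_wpM2l hmu ent.
lra.
Qed.


Lemma phi_lb (u : R) : 0 <= u -> -1 <= u * ln u.
Proof.
move=> u0; case: (eqVneq u 0) => [->|un0]; first by rewrite mul0r; lra.
have up : 0 < u by rewrite lt_def un0.
have ui : 0 < u^-1 by rewrite invr_gt0.
have h := ln_le_sub1 ui; rewrite lnV ?posrE // in h.
have : u * (- ln u) <= u * (u^-1 - 1) by apply: ler_wpM2l => //; lra.
rewrite mulrBr mulr1 divff ?gt_eqF //; nra.
Qed.

Lemma obj_lb (c : T -> R) mu (hmu : 0 <= mu) (hc : forall e, 0 <= c e) x :
  in_simplex x -> - (mu * #|{: T}|%:R) <= objective c mu x.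
Proof.
case=> x0 x1; rewrite /objective negentE.
have h1 : 0 <= \sum_e c e * x e by apply: sumr_ge0 => e _; rewrite mulr_ge0.
have h2 : - (#|{: T}|%:R) <= \sum_e x e * ln (x e).
  rewrite -sumr_const -sumrN; apply: ler_sum => e _; exact: phi_lb.
have := ler_wpM2l hmu h2; nra.
Qed.

Lemma prod_feasible (d : L + Rt -> R) : demand d ->
  exists x : T -> R, in_simplex x /\ Bt x = d.
Proof.
case=> -[a0 a1] [b0 b1].
exists (fun e => d (inl e.1) * d (inr e.2)); split.
  split; first by move=> e; rewrite mulr_ge0.
  rewrite sum_rows /= -a1; apply: eq_bigr => i _; by rewrite -mulr_sumr b1 mulr1.
apply: boolp.funext => -[i|j].
  by rewrite Bt_inl /= -mulr_sumr b1 mulr1.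
by rewrite Bt_inr /= -mulr_suml a1 mul1r.
Qed.

Section Inf.
Local Open Scope classical_set_scope.
Lemma OPT_bound (c : T -> R) (mu B K0 : R) (d d' : L + Rt -> R)
  (hlb : forall x, in_simplex x -> B <= objective c mu x)
  (hne : exists x, in_simplex x /\ Bt x = d')
  (H : forall x', in_simplex x' -> Bt x' = d' ->
     exists x, (in_simplex x /\ Bt x = d) /\ objective c mu x <= objective c mu x' + K0) :
  OPT c mu d <= OPT c mu d' + K0.
Proof.
have lbS : has_lbound [set objective c mu x | x in [set x | in_simplex x /\ Bt x = d]].
  by exists B => _ [x [hx _] <-]; exact: hlb.
have key : lbound [set objective c mu x | x in [set x | in_simplex x /\ Bt x = d']]
    (OPT c mu d - K0).
  move=> _ [x' [hx' hB] <-].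
  have [x [hx hxx]] := H x' hx' hB.
  have : OPT c mu d <= objective c mu x by apply: ge_inf => //; exists x.
  lra.
have ne : nonempty [set objective c mu x | x in [set x | in_simplex x /\ Bt x = d']].
  by case: hne => x hx; exists (objective c mu x), x.
have := lb_le_inf ne key.
rewrite /OPT; lra.
Qed.
End Inf.

End S.

Unset Implicit Arguments.
Theorem mainTheorem12 (R : realType) (L Rt : finType)
  (hL : (0 < #|L|)%N) (hR : (0 < #|Rt|)%N)
  (hm : (3 <= #|L| * #|Rt|)%N)
  (mu : R) (hmu : 0 <= mu)
  (c : L * Rt -> R) (hc : forall e, 0 <= c e)
  (d d' : L + Rt -> R) (hd : demand d) (hd' : demand d') :
  let m : R := (#|L| * #|Rt|)%:R in
  OPT c mu d <= OPT c mu d'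
    + (2 * normInf c + 66 * mu * ln m) * norm1 (fun v => d v - d' v)
    + mu * m ^- 30.
Proof.
cbv zeta; set m : R := (#|L| * #|Rt|)%:R.
have mE : m = #|{: L * Rt}|%:R by rewrite card_prod.
have m3 : 3 <= m by rewrite /m (ler_nat R 3).
have m1 : 1 <= m by lra.
have lm : 2 / 3 <= ln m.
  have mi : 0 < m^-1 by rewrite invr_gt0; lra.
  have h := ln_le_sub1 mi; rewrite lnV ?posrE in h; last lra.
  have mm : m * m^-1 = 1 by rewrite divff // gt_eqF //; lra.
  nra.
have mK : m * (m ^+ 31)^-1 = m ^- 30.
  by rewrite exprS invfM mulrA divff ?mul1r // gt_eqF //; lra.
rewrite -addrA.
have N0 := normInf_ge0 c.
apply: (OPT_bound (B := - (mu * #|{: L * Rt}|%:R))).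
- by move=> x hx; exact: obj_lb.
- exact: prod_feasible.
move=> x' hx' hB.
have [x [y [E [s [[hx hBx] hxy hy E0 [sE sW sd]]]]]] := construct hd hd' hx' hB.
exists x; split => //.
have := obj_step hmu hc 31 hx hx' hxy hy E0 sE sW mE m1.
have s0 : 0 <= s by rewrite -sW sumr_ge0 // => e _; case/andP: (hy e) => _ h; rewrite subr_ge0.
rewrite mK.
move: sd; move: (norm1 _) => dl sd.
move: N0; move: (normInf c) => N N0 hobj.
have h1 : N * s <= N * dl by rewrite ler_wpM2l.
have h2 : s + 31 * ln m * s <= 66 * ln m * dl.
  have : s * (1 + 31 * ln m) <= dl * (1 + 31 * ln m) by rewrite ler_wpM2r //; lra.
  have : 0 <= dl * (35 * ln m - 1) by apply: mulr_ge0; lra.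
  lra.
have h3 : mu * (s + 31 * ln m * s) <= mu * (66 * ln m * dl) by rewrite ler_wpM2l.
have : N * dl <= 2 * N * dl by nra.
nra.
Qed.
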